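(* Let $(M,g)$ be a four-dimensional spacetime with signature $(+,-,-,-)$ and let $X_{abcd}$ be an arbitrary $(2,2)$ double form at a point. Decompose $X=\sum_{i=1}^{6}{}^{(i)}X$ as follows: $S_{abcd}=\tfrac12(X_{abcd}+X_{cdab})$, $A_{abcd}=\tfrac12(X_{abcd}-X_{cdab})$; ${}^{(4)}X_{abcd}=\tfrac1{24}\sum_{\pi}\mathrm{sgn}(\pi)X_{\pi(abcd)}$ (total antisymmetrization over the four indices); ${}^{(c)}X=S-{}^{(4)}X$; with $X_{ac}=g^{bd}X_{abcd}$, $X=g^{ac}X_{ac}$, ${}^{(3)}X_{abcd}=\tfrac{X}{12}(g_{ac}g_{bd}-g_{ad}g_{bc})$; with $h_{ab}$ the traceless part $h_{ab}=c_{ab}-\tfrac14 c\,g_{ab}$ of the first trace $c_{ab}=g^{bd}\,{}^{(c)}X_{abcd}$, ${}^{(2)}X_{abcd}=\tfrac12(g_{ac}h_{bd}-g_{ad}h_{bc}+g_{bd}h_{ac}-g_{bc}h_{ad})$; ${}^{(1)}X={}^{(c)}X-{}^{(2)}X-{}^{(3)}X$; with $k_{ac}=g^{bd}A_{abcd}$, ${}^{(6)}X_{abcd}=\tfrac12(g_{ac}k_{bd}-g_{ad}k_{bc}+g_{bd}k_{ac}-g_{bc}k_{ad})$; ${}^{(5)}X=A-{}^{(6)}X$. Then, with $\overleftrightarrow{\star}Y_{abcd}=\tfrac14\varepsilon_{ab}{}^{pq}\varepsilon_{cd}{}^{rs}Y_{pqrs}$, $$\overleftrightarrow{\star}\,{}^{(1)}X=-{}^{(1)}X,\quad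 \overleftrightarrow{\star}\,{}^{(2)}X=+{}^{(2)}X,\quad \overleftrightarrow{\star}\,{}^{(3)}X=-{}^{(3)}X,$$ $$\overleftrightarrow{\star}\,{}^{(4)}X=-{}^{(4)}X,\quad \overleftrightarrow{\star}\,{}^{(5)}X=+{}^{(5)}X,\quad \overleftrightarrow{\star}\,{}^{(6)}X=-{}^{(6)}X.$$
   Context: A $(2,2)$ double form is a covariant 4-tensor with $X_{abcd}=-X_{bacd}=-X_{abdc}$. The Levi-Civita tensors are $\varepsilon_{abcd}=\sqrt{-\det g}\,[abcd]$, $\varepsilon^{abcd}=-[abcd]/\sqrt{-\det g}$ with $[0123]=+1$, so that $\varepsilon^{a_1\dots a_4}\varepsilon_{b_1\dots b_4}=-\delta^{a_1\dots a_4}_{b_1\dots b_4}$ (generalized Kronecker delta). The pieces ${}^{(i)}X$ are the six irreducible components of $X$ under the pseudo-orthogonal group: ${}^{(1)}X$ is symmetric, satisfies the cyclic identity and is traceless; ${}^{(2)}X,{}^{(3)}X$ are Kulkarni–Nomizu products of the metric with the traceless first trace and with a multiple of the metric; ${}^{(4)}X$ is a 4-form; ${}^{(5)}X$ is antisymmetric (under $ab\leftrightarrow cd$) and traceless; ${}^{(6)}X$ is the antisymmetric Kulkarni–Nomizu piece. *)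

(* Defs.v *)
From HB Require Import structures.
From mathcomp Require Import all_boot all_order all_algebra all_fingroup.
Set Implicit Arguments. Unset Strict Implicit. Unset Printing Implicit Defensive.
Import Order.TTheory GRing.Theory Num.Theory.
Local Open Scope ring_scope.

(* Components of covariant rank-4 tensors at a point, indices in {0,1,2,3}. *)
Definition tensor4 (R : Type) := 'I_4 -> 'I_4 -> 'I_4 -> 'I_4 -> R.
Definition tensor2 (R : Type) := 'I_4 -> 'I_4 -> R.

Section Defs.
Variable R : rcfType.
Variable g : 'M[R]_4.

Definition double_form (X : tensor4 R) : Prop :=
  (forall a b c d, X a b c d = - X b a c d) /\
  (forall a b c d, X a b c d = - X a b d c).

Definition minkowski_eta : 'M[R]_4 :=
  diag_mx (\row_(i < 4) (if i == ord0 then 1 else -1)).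
Definition lorentzian (g : 'M[R]_4) : Prop :=
  g^T = g /\ exists P : 'M[R]_4, P \in unitmx /\ g = P^T *m minkowski_eta *m P.

Definition ginv : 'M[R]_4 := invmx g.

(* Levi-Civita symbol [abcd] with [0123] = +1 (sign of permutation, 0 if repeated). *)
Definition sgdiff (i j : 'I_4) : R := (sgz ((j : int) - (i : int)))%:~R.
Definition levi (a b c d : 'I_4) : R :=
  sgdiff a b * sgdiff a c * sgdiff a d * sgdiff b c * sgdiff b d * sgdiff c d.

Definition eps_low (a b c d : 'I_4) : R := Num.sqrt (- \det g) * levi a b c d.
Definition eps_mixed (a b p q : 'I_4) : R :=
  \sum_(m < 4) \sum_(n < 4) eps_low a b m n * ginv m p * ginv n q.

Definition dstar (Y : tensor4 R) : tensor4 R := fun a b c d =>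
  4^-1 * \sum_(p < 4) \sum_(q < 4) \sum_(r < 4) \sum_(s < 4)
     eps_mixed a b p q * eps_mixed c d r s * Y p q r s.

Definition tr1 (Y : tensor4 R) : tensor2 R := fun a c =>
  \sum_(b < 4) \sum_(d < 4) ginv b d * Y a b c d.
Definition tr2 (h : tensor2 R) : R := \sum_(a < 4) \sum_(c < 4) ginv a c * h a c.

Definition KN (h : tensor2 R) : tensor4 R := fun a b c d =>
  2^-1 * (g a c * h b d - g a d * h b c + g b d * h a c - g b c * h a d).

Variable X : tensor4 R.

Definition Xsym : tensor4 R := fun a b c d => 2^-1 * (X a b c d + X c d a b).
Definition Xanti : tensor4 R := fun a b c d => 2^-1 * (X a b c d - X c d a b).

Definition X4 : tensor4 R := fun a b c d =>
  let idx := [tuple a; b; c; d] in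
  24^-1 * \sum_(s : 'S_4) (-1) ^+ (odd_perm s) *
     X (tnth idx (s 0)) (tnth idx (s 1)) (tnth idx (s 2)) (tnth idx (s 3)).

Definition Xc : tensor4 R := fun a b c d => Xsym a b c d - X4 a b c d.

Definition X3 : tensor4 R := fun a b c d =>
  tr2 (tr1 X) / 12 * (g a c * g b d - g a d * g b c).

Definition hXc : tensor2 R := fun a b => tr1 Xc a b - tr2 (tr1 Xc) / 4 * g a b.
Definition X2 : tensor4 R := KN hXc.
Definition X1 : tensor4 R := fun a b c d => Xc a b c d - X2 a b c d - X3 a b c d.

Definition X6 : tensor4 R := KN (tr1 Xanti).
Definition X5 : tensor4 R := fun a b c d => Xanti a b c d - X6 a b c d.

End Defs.

(* Main.v *)
Require Import Defs.
From HB Require Import structures.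
From mathcomp Require Import all_boot all_order all_algebra all_fingroup.
From mathcomp Require Import ring lra.
Import Order.TTheory GRing.Theory Num.Theory.
Local Open Scope ring_scope.

Set Implicit Arguments. Unset Strict Implicit. Unset Printing Implicit Defensive.

Definition o0 : 'I_4 := @Ordinal 4 0 isT.
Definition o1 : 'I_4 := @Ordinal 4 1 isT.
Definition o2 : 'I_4 := @Ordinal 4 2 isT.
Definition o3 : 'I_4 := @Ordinal 4 3 isT.

Lemma sum4E (V : nmodType) (F : 'I_4 -> V) : \sum_(i < 4) F i = F o0 + F o1 + F o2 + F o3.
Proof.
rewrite !big_ord_recr big_ord0 /=. rewrite add0r.
by congr (F _ + F _ + F _ + F _); apply: val_inj.
Qed.

Lemma inord_o0 : inord 0 = o0. Proof. by apply: val_inj; rewrite /= inordK. Qed.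
Lemma inord_o1 : inord 1 = o1. Proof. by apply: val_inj; rewrite /= inordK. Qed.
Lemma inord_o2 : inord 2 = o2. Proof. by apply: val_inj; rewrite /= inordK. Qed.
Lemma inord_o3 : inord 3 = o3. Proof. by apply: val_inj; rewrite /= inordK. Qed.

Section Det.
Variable R : rcfType.

Lemma sgdiffE (i j : 'I_4) : sgdiff R i j = if (i < j)%N then 1 else if (i == j :> nat) then 0 else -1.
Proof.
rewrite /sgdiff; case: ltngtP => h.
- have : (0 < (j:int) - (i:int))%R by rewrite subr_gt0 ltz_nat.
  by move/gtr0_sgz => ->.
- have : ((j:int) - (i:int) < 0)%R by rewrite subr_lt0 ltz_nat.
  by move/ltr0_sgz => ->.
- by rewrite h subrr.
Qed.

Lemma exp_det (n : nat) (A : 'M[R]_n.+1) :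
  \det A = \sum_(i < n.+1) A i 0 * ((-1) ^+ i * \det (row' i (col' 0 A))).
Proof. by rewrite (expand_det_col _ 0); apply: eq_bigr => i _; rewrite /cofactor addn0. Qed.

Lemma sum3E (F : 'I_3 -> R) : \sum_(i < 3) F i = F (@Ordinal 3 0 isT) + F (@Ordinal 3 1 isT) + F (@Ordinal 3 2 isT).
Proof.
rewrite !big_ord_recr big_ord0 /= add0r.
by congr (F _ + F _ + F _); apply: val_inj.
Qed.
Lemma sum2E (F : 'I_2 -> R) : \sum_(i < 2) F i = F (@Ordinal 2 0 isT) + F (@Ordinal 2 1 isT).
Proof. by rewrite !big_ord_recr big_ord0 /= add0r; congr (F _ + F _); apply: val_inj. Qed.

Lemma leibnizm (m : nat -> nat -> R) : \det (\matrix_(i < 4, j < 4) m i j) =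
  \sum_(i < 4) \sum_(j < 4) \sum_(k < 4) \sum_(l < 4)
    levi R i j k l * m i 0%N * m j 1%N * m k 2%N * m l 3%N.
Proof.
rewrite exp_det sum4E.
rewrite !exp_det !sum3E !exp_det !sum2E.
rewrite !det_mx11 !mxE /= /bump /=.
rewrite !sum4E.
rewrite /levi !sgdiffE /=.
ring.
Qed.

Lemma leibnizf (f : 'I_4 -> nat -> R) : \det (\matrix_(i < 4, j < 4) f i j) =
  \sum_(i < 4) \sum_(j < 4) \sum_(k < 4) \sum_(l < 4)
    levi R i j k l * f i 0%N * f j 1%N * f k 2%N * f l 3%N.
Proof.
transitivity (\det (\matrix_(i < 4, j < 4) (fun i j : nat => f (inord i) j) i j)).
  by congr (\det _); apply/matrixP => i j; rewrite !mxE inord_val.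
rewrite (leibnizm (fun i j : nat => f (inord i) j)).
apply: eq_bigr => i _; apply: eq_bigr => j _; apply: eq_bigr => k _; apply: eq_bigr => l _.
by rewrite !inord_val.
Qed.

Lemma det4 (M : 'M[R]_4) : \det M =
    (M o0 o0 * M o1 o1 * M o2 o2 * M o3 o3)
  + - (M o0 o0 * M o1 o1 * M o2 o3 * M o3 o2)
  + - (M o0 o0 * M o1 o2 * M o2 o1 * M o3 o3)
  + (M o0 o0 * M o1 o2 * M o2 o3 * M o3 o1)
  + (M o0 o0 * M o1 o3 * M o2 o1 * M o3 o2)
  + - (M o0 o0 * M o1 o3 * M o2 o2 * M o3 o1)
  + - (M o0 o1 * M o1 o0 * M o2 o2 * M o3 o3)
  + (M o0 o1 * M o1 o0 * M o2 o3 * M o3 o2)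
  + (M o0 o1 * M o1 o2 * M o2 o0 * M o3 o3)
  + - (M o0 o1 * M o1 o2 * M o2 o3 * M o3 o0)
  + - (M o0 o1 * M o1 o3 * M o2 o0 * M o3 o2)
  + (M o0 o1 * M o1 o3 * M o2 o2 * M o3 o0)
  + (M o0 o2 * M o1 o0 * M o2 o1 * M o3 o3)
  + - (M o0 o2 * M o1 o0 * M o2 o3 * M o3 o1)
  + - (M o0 o2 * M o1 o1 * M o2 o0 * M o3 o3)
  + (M o0 o2 * M o1 o1 * M o2 o3 * M o3 o0)
  + (M o0 o2 * M o1 o3 * M o2 o0 * M o3 o1)
  + - (M o0 o2 * M o1 o3 * M o2 o1 * M o3 o0)
  + - (M o0 o3 * M o1 o0 * M o2 o1 * M o3 o2)
  + (M o0 o3 * M o1 o0 * M o2 o2 * M o3 o1)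
  + (M o0 o3 * M o1 o1 * M o2 o0 * M o3 o2)
  + - (M o0 o3 * M o1 o1 * M o2 o2 * M o3 o0)
  + - (M o0 o3 * M o1 o2 * M o2 o0 * M o3 o1)
  + (M o0 o3 * M o1 o2 * M o2 o1 * M o3 o0).
Proof.
transitivity (\det (\matrix_(i < 4, j < 4) (fun i j : nat => M (inord i) (inord j)) i j)).
  by congr (\det _); apply/matrixP => i j; rewrite !mxE !inord_val.
rewrite (leibnizm (fun i j : nat => M (inord i) (inord j))) !sum4E /levi !sgdiffE /= inord_o0 inord_o1 inord_o2 inord_o3.
ring.
Qed.
End Det.

Definition dl {R : rcfType} (i j : 'I_4) : R := (i == j)%:R.

Lemma dlC (R : rcfType) (i j : 'I_4) : dl i j = dl j i :> R.
Proof. by rewrite /dl eq_sym. Qed.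
Lemma dlxx (R : rcfType) (i : 'I_4) : dl i i = 1 :> R.
Proof. by rewrite /dl eqxx. Qed.
Lemma dlN (R : rcfType) (i j : 'I_4) : i != j -> dl i j = 0 :> R.
Proof. by move/negbTE=> h; rewrite /dl h. Qed.
Arguments dlN {R i j} _.

Lemma sum_only (R : rcfType) (F : 'I_4 -> R) a : (forall i, i != a -> F i = 0) -> \sum_i F i = F a.
Proof. by move=> h; rewrite (bigD1 a) //= big1 ?addr0 // => i /h. Qed.
Arguments sum_only {R F} a.

Section Metric.
Variable R : rcfType.
Variable g : 'M[R]_4.
Local Notation G := (ginv g).
Hypothesis gsym : forall i j, g i j = g j i.
Hypothesis Gsym : forall i j, G i j = G j i.
Hypothesis gG : forall i j, \sum_k g i k * G k j = dl i j.
Hypothesis Gg : forall i j, \sum_k G i k * g k j = dl i j.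
Hypothesis sq2 : Num.sqrt (- \det g) ^+ 2 = - \det g.

Definition ucol (a b p q i : 'I_4) (t : nat) : R :=
  match t with 0 => dl i a | 1 => dl i b | 2 => G i p | _ => G i q end.
Definition Um (a b p q : 'I_4) : 'M[R]_4 := \matrix_(i < 4, t < 4) ucol a b p q i t.

Lemma detU a b p q : \det (Um a b p q) = \sum_m \sum_n levi R a b m n * G m p * G n q.
Proof.
rewrite leibnizf /=.
rewrite (sum_only a) => [|i ia]; last first.
  by apply: big1 => j _; apply: big1 => k _; apply: big1 => l _; rewrite dlN // mulr0 !mul0r.
rewrite (sum_only b) => [|j jb]; last first.
  by apply: big1 => k _; apply: big1 => l _; rewrite (dlN jb) mulr0 !mul0r.
apply: eq_bigr => k _; apply: eq_bigr => l _.
by rewrite !dlxx !mulr1.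
Qed.

Lemma em_det a b p q : eps_mixed g a b p q = Num.sqrt (- \det g) * \det (Um a b p q).
Proof.
rewrite detU /eps_mixed mulr_sumr; apply: eq_bigr => m _.
rewrite mulr_sumr; apply: eq_bigr => n _.
rewrite /eps_low; ring.
Qed.

Lemma emem a b p q c d r s : eps_mixed g a b p q * eps_mixed g c d r s =
  - \det ((Um a b p q)^T *m g *m Um c d r s).
Proof.
rewrite !em_det !det_mulmx det_tr.
have -> : Num.sqrt (- \det g) * \det (Um a b p q) * (Num.sqrt (- \det g) * \det (Um c d r s))
  = Num.sqrt (- \det g) ^+ 2 * (\det (Um a b p q) * \det (Um c d r s)) by ring.
rewrite sq2; ring.
Qed.

Lemma Nentry a b p q c d r s i j :
  ((Um a b p q)^T *m g *m Um c d r s) i j =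
  \sum_x \sum_y ucol a b p q x i * g x y * ucol c d r s y j.
Proof.
rewrite !mxE exchange_big; apply: eq_bigr => y _.
rewrite !mxE mulr_suml; apply: eq_bigr => x _.
by rewrite !mxE.
Qed.

Lemma cdd a c : \sum_x \sum_y dl x a * g x y * dl y c = g a c.
Proof.
rewrite (sum_only a) => [|x xa]; last by apply: big1 => y _; rewrite dlN // !mul0r.
rewrite (sum_only c) => [|y yc]; last by rewrite (dlN yc) mulr0.
by rewrite !dlxx mul1r mulr1.
Qed.

Lemma cdG a r : \sum_x \sum_y dl x a * g x y * G y r = dl r a.
Proof.
rewrite (sum_only a) => [|x xa]; last by apply: big1 => y _; rewrite dlN // !mul0r.
rewrite dlxx (dlC R r a) -gG; apply: eq_bigr => y _; by rewrite mul1r.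
Qed.

Lemma cGd p c : \sum_x \sum_y G x p * g x y * dl y c = dl p c.
Proof.
rewrite exchange_big (sum_only c) => [|y yc]; last by apply: big1 => x _; rewrite (dlN yc) mulr0.
rewrite dlxx -Gg; apply: eq_bigr => x _; by rewrite mulr1 (Gsym x p).
Qed.

Lemma cGG p r : \sum_x \sum_y G x p * g x y * G y r = G p r.
Proof.
rewrite exchange_big.
transitivity (\sum_y dl p y * G y r).
  apply: eq_bigr => y _; rewrite -mulr_suml -Gg; congr (_ * _).
  by apply: eq_bigr => x _; rewrite Gsym.
rewrite (sum_only p) => [|y yp]; last by rewrite dlC (dlN yp) mul0r.
by rewrite dlxx mul1r.
Qed.

Lemma detN a b p q c d r s : \det ((Um a b p q)^T *m g *m Um c d r s) =
        (g a c * g b d * G p r * G q s)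
  + - (g a c * g b d * G p s * G q r)
  + - (g a c * dl r b * dl p d * G q s)
  + (g a c * dl r b * G p s * dl q d)
  + (g a c * dl s b * dl p d * G q r)
  + - (g a c * dl s b * G p r * dl q d)
  + - (g a d * g b c * G p r * G q s)
  + (g a d * g b c * G p s * G q r)
  + (g a d * dl r b * dl p c * G q s)
  + - (g a d * dl r b * G p s * dl q c)
  + - (g a d * dl s b * dl p c * G q r)
  + (g a d * dl s b * G p r * dl q c)
  + (dl r a * g b c * dl p d * G q s)
  + - (dl r a * g b c * G p s * dl q d)
  + - (dl r a * g b d * dl p c * G q s)
  + (dl r a * g b d * G p s * dl q c)
  + (dl r a * dl s b * dl p c * dl q d)
  + - (dl r a * dl s b * dl p d * dl q c)
  + - (dl s a * g b c * dl p d * G q r)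
  + (dl s a * g b c * G p r * dl q d)
  + (dl s a * g b d * dl p c * G q r)
  + - (dl s a * g b d * G p r * dl q c)
  + - (dl s a * dl r b * dl p c * dl q d)
  + (dl s a * dl r b * dl p d * dl q c).
Proof. by rewrite det4 !Nentry /= !cdd !cdG !cGd !cGG. Qed.

End Metric.

Section Contr.
Variable R : rcfType.
Variable g : 'M[R]_4.
Local Notation G := (ginv g).
Variable Y : tensor4 R.
Hypothesis YA1 : forall a b c d, Y a b c d = - Y b a c d.
Hypothesis YA2 : forall a b c d, Y a b c d = - Y a b d c.

Lemma sumT_xuyv x y : \sum_(u < 4) \sum_(v < 4) (G u v * Y x u y v) = tr1 g Y x y.
Proof. by []. Qed.
Lemma sumT_uxyv x y : \sum_(u < 4) \sum_(v < 4) (G u v * Y u x y v) = - tr1 g Y x y.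
Proof.
rewrite /tr1 -sumrN; apply: eq_bigr => u _; rewrite -sumrN; apply: eq_bigr => v _.
rewrite (YA1 u x y v); ring.
Qed.
Lemma sumT_xuvy x y : \sum_(u < 4) \sum_(v < 4) (G u v * Y x u v y) = - tr1 g Y x y.
Proof.
rewrite /tr1 -sumrN; apply: eq_bigr => u _; rewrite -sumrN; apply: eq_bigr => v _.
rewrite (YA2 x u v y); ring.
Qed.
Lemma sumT_uxvy x y : \sum_(u < 4) \sum_(v < 4) (G u v * Y u x v y) = tr1 g Y x y.
Proof.
rewrite /tr1; apply: eq_bigr => u _; apply: eq_bigr => v _.
rewrite (YA1 u x v y) (YA2 x u v y); ring.
Qed.
Lemma sumS1 : \sum_(p < 4) \sum_(q < 4) \sum_(r < 4) \sum_(s < 4) (G p r * G q s * Y p q r s)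
  = tr2 g (tr1 g Y).
Proof.
rewrite /tr2 /tr1; apply: eq_bigr => p _; rewrite exchange_big; apply: eq_bigr => r _.
rewrite mulr_sumr; apply: eq_bigr => q _; rewrite mulr_sumr; apply: eq_bigr => s _; ring.
Qed.
Lemma sumS2 : \sum_(p < 4) \sum_(q < 4) \sum_(r < 4) \sum_(s < 4) (G p s * G q r * Y p q r s)
  = - tr2 g (tr1 g Y).
Proof.
rewrite -sumS1 -sumrN; apply: eq_bigr => p _; rewrite -sumrN; apply: eq_bigr => q _.
rewrite exchange_big -sumrN; apply: eq_bigr => x _; rewrite -sumrN; apply: eq_bigr => y _.
rewrite (YA2 p q y x); ring.
Qed.
Lemma sum4_scale (k : R) (F : 'I_4 -> 'I_4 -> 'I_4 -> 'I_4 -> R) :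
  \sum_(p < 4) \sum_(q < 4) \sum_(r < 4) \sum_(s < 4) (k * F p q r s) =
  k * \sum_(p < 4) \sum_(q < 4) \sum_(r < 4) \sum_(s < 4) F p q r s.
Proof.
rewrite mulr_sumr; apply: eq_bigr => p _; rewrite mulr_sumr; apply: eq_bigr => q _.
rewrite mulr_sumr; apply: eq_bigr => r _; rewrite mulr_sumr; apply: eq_bigr => s _ //.
Qed.
Lemma sum4_split (F H : 'I_4 -> 'I_4 -> 'I_4 -> 'I_4 -> R) :
  \sum_(p < 4) \sum_(q < 4) \sum_(r < 4) \sum_(s < 4) (F p q r s + H p q r s) =
  \sum_(p < 4) \sum_(q < 4) \sum_(r < 4) \sum_(s < 4) F p q r s +
  \sum_(p < 4) \sum_(q < 4) \sum_(r < 4) \sum_(s < 4) H p q r s.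
Proof.
rewrite -big_split; apply: eq_bigr => p _; rewrite -big_split; apply: eq_bigr => q _.
rewrite -big_split; apply: eq_bigr => r _; rewrite -big_split //.
Qed.

Lemma term0 a b c d : \sum_(p < 4) \sum_(q < 4) \sum_(r < 4) \sum_(s < 4) ((g a c * g b d * G p r * G q s) * Y p q r s) =
  1 * g a c * g b d * tr2 g (tr1 g Y).
Proof.
transitivity (\sum_(p < 4) \sum_(q < 4) \sum_(r < 4) \sum_(s < 4) ((g a c * g b d * G p r * G q s) * Y p q r s)).
  apply: eq_bigr => p _.
  apply: eq_bigr => q _.
  apply: eq_bigr => r _.
  apply: eq_bigr => s _.
  reflexivity.
transitivity ((1 * g a c * g b d) * \sum_(p < 4) \sum_(q < 4) \sum_(r < 4) \sum_(s < 4) (G p r * G q s * Y p q r s)).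
  rewrite -sum4_scale; apply: eq_bigr => p _; apply: eq_bigr => q _; apply: eq_bigr => r _; apply: eq_bigr => s _; ring.
by rewrite sumS1; ring.
Qed.

Lemma term1 a b c d : \sum_(p < 4) \sum_(q < 4) \sum_(r < 4) \sum_(s < 4) (- (g a c * g b d * G p s * G q r) * Y p q r s) =
  1 * g a c * g b d * tr2 g (tr1 g Y).
Proof.
transitivity (\sum_(p < 4) \sum_(q < 4) \sum_(r < 4) \sum_(s < 4) (- (g a c * g b d * G p s * G q r) * Y p q r s)).
  apply: eq_bigr => p _.
  apply: eq_bigr => q _.
  apply: eq_bigr => r _.
  apply: eq_bigr => s _.
  reflexivity.
transitivity (((-1) * g a c * g b d) * \sum_(p < 4) \sum_(q < 4) \sum_(r < 4) \sum_(s < 4) (G p s * G q r * Y p q r s)).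
  rewrite -sum4_scale; apply: eq_bigr => p _; apply: eq_bigr => q _; apply: eq_bigr => r _; apply: eq_bigr => s _; ring.
by rewrite sumS2; ring.
Qed.

Lemma term2 a b c d : \sum_(p < 4) \sum_(q < 4) \sum_(r < 4) \sum_(s < 4) (- (g a c * dl r b * dl p d * G q s) * Y p q r s) =
  (-1) * g a c * tr1 g Y d b.
Proof.
transitivity (\sum_(q < 4) \sum_(s < 4) (- (g a c * dl b b * dl d d * G q s) * Y d q b s)).
  rewrite (sum_only d) => [|i hi]; last by apply: big1 => q _; apply: big1 => r _; apply: big1 => s _; rewrite (dlN hi); ring.
  apply: eq_bigr => q _.
  rewrite (sum_only b) => [|i hi]; last by apply: big1 => s _; rewrite (dlN hi); ring.
  apply: eq_bigr => s _.
  reflexivity.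
transitivity (((-1) * g a c) * \sum_(q < 4) \sum_(s < 4) (G q s * Y d q b s)).
  rewrite mulr_sumr; apply: eq_bigr => q _; rewrite mulr_sumr; apply: eq_bigr => s _.
  rewrite !dlxx; ring.
by rewrite sumT_xuyv; ring.
Qed.

Lemma term3 a b c d : \sum_(p < 4) \sum_(q < 4) \sum_(r < 4) \sum_(s < 4) ((g a c * dl r b * G p s * dl q d) * Y p q r s) =
  (-1) * g a c * tr1 g Y d b.
Proof.
transitivity (\sum_(p < 4) \sum_(s < 4) ((g a c * dl b b * G p s * dl d d) * Y p d b s)).
  apply: eq_bigr => p _.
  rewrite (sum_only d) => [|i hi]; last by apply: big1 => r _; apply: big1 => s _; rewrite (dlN hi); ring.
  rewrite (sum_only b) => [|i hi]; last by apply: big1 => s _; rewrite (dlN hi); ring.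
  apply: eq_bigr => s _.
  reflexivity.
transitivity ((1 * g a c) * \sum_(p < 4) \sum_(s < 4) (G p s * Y p d b s)).
  rewrite mulr_sumr; apply: eq_bigr => p _; rewrite mulr_sumr; apply: eq_bigr => s _.
  rewrite !dlxx; ring.
by rewrite sumT_uxyv; ring.
Qed.

Lemma term4 a b c d : \sum_(p < 4) \sum_(q < 4) \sum_(r < 4) \sum_(s < 4) ((g a c * dl s b * dl p d * G q r) * Y p q r s) =
  (-1) * g a c * tr1 g Y d b.
Proof.
transitivity (\sum_(q < 4) \sum_(r < 4) ((g a c * dl b b * dl d d * G q r) * Y d q r b)).
  rewrite (sum_only d) => [|i hi]; last by apply: big1 => q _; apply: big1 => r _; apply: big1 => s _; rewrite (dlN hi); ring.
  apply: eq_bigr => q _.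
  apply: eq_bigr => r _.
  rewrite (sum_only b) => [|i hi]; last by rewrite (dlN hi); ring.
  reflexivity.
transitivity ((1 * g a c) * \sum_(q < 4) \sum_(r < 4) (G q r * Y d q r b)).
  rewrite mulr_sumr; apply: eq_bigr => q _; rewrite mulr_sumr; apply: eq_bigr => r _.
  rewrite !dlxx; ring.
by rewrite sumT_xuvy; ring.
Qed.

Lemma term5 a b c d : \sum_(p < 4) \sum_(q < 4) \sum_(r < 4) \sum_(s < 4) (- (g a c * dl s b * G p r * dl q d) * Y p q r s) =
  (-1) * g a c * tr1 g Y d b.
Proof.
transitivity (\sum_(p < 4) \sum_(r < 4) (- (g a c * dl b b * G p r * dl d d) * Y p d r b)).
  apply: eq_bigr => p _.
  rewrite (sum_only d) => [|i hi]; last by apply: big1 => r _; apply: big1 => s _; rewrite (dlN hi); ring.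
  apply: eq_bigr => r _.
  rewrite (sum_only b) => [|i hi]; last by rewrite (dlN hi); ring.
  reflexivity.
transitivity (((-1) * g a c) * \sum_(p < 4) \sum_(r < 4) (G p r * Y p d r b)).
  rewrite mulr_sumr; apply: eq_bigr => p _; rewrite mulr_sumr; apply: eq_bigr => r _.
  rewrite !dlxx; ring.
by rewrite sumT_uxvy; ring.
Qed.

Lemma term6 a b c d : \sum_(p < 4) \sum_(q < 4) \sum_(r < 4) \sum_(s < 4) (- (g a d * g b c * G p r * G q s) * Y p q r s) =
  (-1) * g a d * g b c * tr2 g (tr1 g Y).
Proof.
transitivity (\sum_(p < 4) \sum_(q < 4) \sum_(r < 4) \sum_(s < 4) (- (g a d * g b c * G p r * G q s) * Y p q r s)).
  apply: eq_bigr => p _.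
  apply: eq_bigr => q _.
  apply: eq_bigr => r _.
  apply: eq_bigr => s _.
  reflexivity.
transitivity (((-1) * g a d * g b c) * \sum_(p < 4) \sum_(q < 4) \sum_(r < 4) \sum_(s < 4) (G p r * G q s * Y p q r s)).
  rewrite -sum4_scale; apply: eq_bigr => p _; apply: eq_bigr => q _; apply: eq_bigr => r _; apply: eq_bigr => s _; ring.
by rewrite sumS1; ring.
Qed.

Lemma term7 a b c d : \sum_(p < 4) \sum_(q < 4) \sum_(r < 4) \sum_(s < 4) ((g a d * g b c * G p s * G q r) * Y p q r s) =
  (-1) * g a d * g b c * tr2 g (tr1 g Y).
Proof.
transitivity (\sum_(p < 4) \sum_(q < 4) \sum_(r < 4) \sum_(s < 4) ((g a d * g b c * G p s * G q r) * Y p q r s)).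
  apply: eq_bigr => p _.
  apply: eq_bigr => q _.
  apply: eq_bigr => r _.
  apply: eq_bigr => s _.
  reflexivity.
transitivity ((1 * g a d * g b c) * \sum_(p < 4) \sum_(q < 4) \sum_(r < 4) \sum_(s < 4) (G p s * G q r * Y p q r s)).
  rewrite -sum4_scale; apply: eq_bigr => p _; apply: eq_bigr => q _; apply: eq_bigr => r _; apply: eq_bigr => s _; ring.
by rewrite sumS2; ring.
Qed.

Lemma term8 a b c d : \sum_(p < 4) \sum_(q < 4) \sum_(r < 4) \sum_(s < 4) ((g a d * dl r b * dl p c * G q s) * Y p q r s) =
  1 * g a d * tr1 g Y c b.
Proof.
transitivity (\sum_(q < 4) \sum_(s < 4) ((g a d * dl b b * dl c c * G q s) * Y c q b s)).
  rewrite (sum_only c) => [|i hi]; last by apply: big1 => q _; apply: big1 => r _; apply: big1 => s _; rewrite (dlN hi); ring.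
  apply: eq_bigr => q _.
  rewrite (sum_only b) => [|i hi]; last by apply: big1 => s _; rewrite (dlN hi); ring.
  apply: eq_bigr => s _.
  reflexivity.
transitivity ((1 * g a d) * \sum_(q < 4) \sum_(s < 4) (G q s * Y c q b s)).
  rewrite mulr_sumr; apply: eq_bigr => q _; rewrite mulr_sumr; apply: eq_bigr => s _.
  rewrite !dlxx; ring.
by rewrite sumT_xuyv; ring.
Qed.

Lemma term9 a b c d : \sum_(p < 4) \sum_(q < 4) \sum_(r < 4) \sum_(s < 4) (- (g a d * dl r b * G p s * dl q c) * Y p q r s) =
  1 * g a d * tr1 g Y c b.
Proof.
transitivity (\sum_(p < 4) \sum_(s < 4) (- (g a d * dl b b * G p s * dl c c) * Y p c b s)).
  apply: eq_bigr => p _.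
  rewrite (sum_only c) => [|i hi]; last by apply: big1 => r _; apply: big1 => s _; rewrite (dlN hi); ring.
  rewrite (sum_only b) => [|i hi]; last by apply: big1 => s _; rewrite (dlN hi); ring.
  apply: eq_bigr => s _.
  reflexivity.
transitivity (((-1) * g a d) * \sum_(p < 4) \sum_(s < 4) (G p s * Y p c b s)).
  rewrite mulr_sumr; apply: eq_bigr => p _; rewrite mulr_sumr; apply: eq_bigr => s _.
  rewrite !dlxx; ring.
by rewrite sumT_uxyv; ring.
Qed.

Lemma term10 a b c d : \sum_(p < 4) \sum_(q < 4) \sum_(r < 4) \sum_(s < 4) (- (g a d * dl s b * dl p c * G q r) * Y p q r s) =
  1 * g a d * tr1 g Y c b.
Proof.
transitivity (\sum_(q < 4) \sum_(r < 4) (- (g a d * dl b b * dl c c * G q r) * Y c q r b)).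
  rewrite (sum_only c) => [|i hi]; last by apply: big1 => q _; apply: big1 => r _; apply: big1 => s _; rewrite (dlN hi); ring.
  apply: eq_bigr => q _.
  apply: eq_bigr => r _.
  rewrite (sum_only b) => [|i hi]; last by rewrite (dlN hi); ring.
  reflexivity.
transitivity (((-1) * g a d) * \sum_(q < 4) \sum_(r < 4) (G q r * Y c q r b)).
  rewrite mulr_sumr; apply: eq_bigr => q _; rewrite mulr_sumr; apply: eq_bigr => r _.
  rewrite !dlxx; ring.
by rewrite sumT_xuvy; ring.
Qed.

Lemma term11 a b c d : \sum_(p < 4) \sum_(q < 4) \sum_(r < 4) \sum_(s < 4) ((g a d * dl s b * G p r * dl q c) * Y p q r s) =
  1 * g a d * tr1 g Y c b.
Proof.
transitivity (\sum_(p < 4) \sum_(r < 4) ((g a d * dl b b * G p r * dl c c) * Y p c r b)).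
  apply: eq_bigr => p _.
  rewrite (sum_only c) => [|i hi]; last by apply: big1 => r _; apply: big1 => s _; rewrite (dlN hi); ring.
  apply: eq_bigr => r _.
  rewrite (sum_only b) => [|i hi]; last by rewrite (dlN hi); ring.
  reflexivity.
transitivity ((1 * g a d) * \sum_(p < 4) \sum_(r < 4) (G p r * Y p c r b)).
  rewrite mulr_sumr; apply: eq_bigr => p _; rewrite mulr_sumr; apply: eq_bigr => r _.
  rewrite !dlxx; ring.
by rewrite sumT_uxvy; ring.
Qed.

Lemma term12 a b c d : \sum_(p < 4) \sum_(q < 4) \sum_(r < 4) \sum_(s < 4) ((dl r a * g b c * dl p d * G q s) * Y p q r s) =
  1 * g b c * tr1 g Y d a.
Proof.
transitivity (\sum_(q < 4) \sum_(s < 4) ((dl a a * g b c * dl d d * G q s) * Y d q a s)).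
  rewrite (sum_only d) => [|i hi]; last by apply: big1 => q _; apply: big1 => r _; apply: big1 => s _; rewrite (dlN hi); ring.
  apply: eq_bigr => q _.
  rewrite (sum_only a) => [|i hi]; last by apply: big1 => s _; rewrite (dlN hi); ring.
  apply: eq_bigr => s _.
  reflexivity.
transitivity ((1 * g b c) * \sum_(q < 4) \sum_(s < 4) (G q s * Y d q a s)).
  rewrite mulr_sumr; apply: eq_bigr => q _; rewrite mulr_sumr; apply: eq_bigr => s _.
  rewrite !dlxx; ring.
by rewrite sumT_xuyv; ring.
Qed.

Lemma term13 a b c d : \sum_(p < 4) \sum_(q < 4) \sum_(r < 4) \sum_(s < 4) (- (dl r a * g b c * G p s * dl q d) * Y p q r s) =
  1 * g b c * tr1 g Y d a.
Proof.
transitivity (\sum_(p < 4) \sum_(s < 4) (- (dl a a * g b c * G p s * dl d d) * Y p d a s)).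
  apply: eq_bigr => p _.
  rewrite (sum_only d) => [|i hi]; last by apply: big1 => r _; apply: big1 => s _; rewrite (dlN hi); ring.
  rewrite (sum_only a) => [|i hi]; last by apply: big1 => s _; rewrite (dlN hi); ring.
  apply: eq_bigr => s _.
  reflexivity.
transitivity (((-1) * g b c) * \sum_(p < 4) \sum_(s < 4) (G p s * Y p d a s)).
  rewrite mulr_sumr; apply: eq_bigr => p _; rewrite mulr_sumr; apply: eq_bigr => s _.
  rewrite !dlxx; ring.
by rewrite sumT_uxyv; ring.
Qed.

Lemma term14 a b c d : \sum_(p < 4) \sum_(q < 4) \sum_(r < 4) \sum_(s < 4) (- (dl r a * g b d * dl p c * G q s) * Y p q r s) =
  (-1) * g b d * tr1 g Y c a.
Proof.
transitivity (\sum_(q < 4) \sum_(s < 4) (- (dl a a * g b d * dl c c * G q s) * Y c q a s)).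
  rewrite (sum_only c) => [|i hi]; last by apply: big1 => q _; apply: big1 => r _; apply: big1 => s _; rewrite (dlN hi); ring.
  apply: eq_bigr => q _.
  rewrite (sum_only a) => [|i hi]; last by apply: big1 => s _; rewrite (dlN hi); ring.
  apply: eq_bigr => s _.
  reflexivity.
transitivity (((-1) * g b d) * \sum_(q < 4) \sum_(s < 4) (G q s * Y c q a s)).
  rewrite mulr_sumr; apply: eq_bigr => q _; rewrite mulr_sumr; apply: eq_bigr => s _.
  rewrite !dlxx; ring.
by rewrite sumT_xuyv; ring.
Qed.

Lemma term15 a b c d : \sum_(p < 4) \sum_(q < 4) \sum_(r < 4) \sum_(s < 4) ((dl r a * g b d * G p s * dl q c) * Y p q r s) =
  (-1) * g b d * tr1 g Y c a.
Proof.
transitivity (\sum_(p < 4) \sum_(s < 4) ((dl a a * g b d * G p s * dl c c) * Y p c a s)).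
  apply: eq_bigr => p _.
  rewrite (sum_only c) => [|i hi]; last by apply: big1 => r _; apply: big1 => s _; rewrite (dlN hi); ring.
  rewrite (sum_only a) => [|i hi]; last by apply: big1 => s _; rewrite (dlN hi); ring.
  apply: eq_bigr => s _.
  reflexivity.
transitivity ((1 * g b d) * \sum_(p < 4) \sum_(s < 4) (G p s * Y p c a s)).
  rewrite mulr_sumr; apply: eq_bigr => p _; rewrite mulr_sumr; apply: eq_bigr => s _.
  rewrite !dlxx; ring.
by rewrite sumT_uxyv; ring.
Qed.

Lemma term16 a b c d : \sum_(p < 4) \sum_(q < 4) \sum_(r < 4) \sum_(s < 4) ((dl r a * dl s b * dl p c * dl q d) * Y p q r s) =
  1 * Y c d a b.
Proof.
transitivity (((dl a a * dl b b * dl c c * dl d d) * Y c d a b)).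
  rewrite (sum_only c) => [|i hi]; last by apply: big1 => q _; apply: big1 => r _; apply: big1 => s _; rewrite (dlN hi); ring.
  rewrite (sum_only d) => [|i hi]; last by apply: big1 => r _; apply: big1 => s _; rewrite (dlN hi); ring.
  rewrite (sum_only a) => [|i hi]; last by apply: big1 => s _; rewrite (dlN hi); ring.
  rewrite (sum_only b) => [|i hi]; last by rewrite (dlN hi); ring.
  reflexivity.
rewrite !dlxx ; ring.
Qed.

Lemma term17 a b c d : \sum_(p < 4) \sum_(q < 4) \sum_(r < 4) \sum_(s < 4) (- (dl r a * dl s b * dl p d * dl q c) * Y p q r s) =
  1 * Y c d a b.
Proof.
transitivity ((- (dl a a * dl b b * dl d d * dl c c) * Y d c a b)).
  rewrite (sum_only d) => [|i hi]; last by apply: big1 => q _; apply: big1 => r _; apply: big1 => s _; rewrite (dlN hi); ring.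
  rewrite (sum_only c) => [|i hi]; last by apply: big1 => r _; apply: big1 => s _; rewrite (dlN hi); ring.
  rewrite (sum_only a) => [|i hi]; last by apply: big1 => s _; rewrite (dlN hi); ring.
  rewrite (sum_only b) => [|i hi]; last by rewrite (dlN hi); ring.
  reflexivity.
rewrite !dlxx (YA1 d c a b); ring.
Qed.

Lemma term18 a b c d : \sum_(p < 4) \sum_(q < 4) \sum_(r < 4) \sum_(s < 4) (- (dl s a * g b c * dl p d * G q r) * Y p q r s) =
  1 * g b c * tr1 g Y d a.
Proof.
transitivity (\sum_(q < 4) \sum_(r < 4) (- (dl a a * g b c * dl d d * G q r) * Y d q r a)).
  rewrite (sum_only d) => [|i hi]; last by apply: big1 => q _; apply: big1 => r _; apply: big1 => s _; rewrite (dlN hi); ring.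
  apply: eq_bigr => q _.
  apply: eq_bigr => r _.
  rewrite (sum_only a) => [|i hi]; last by rewrite (dlN hi); ring.
  reflexivity.
transitivity (((-1) * g b c) * \sum_(q < 4) \sum_(r < 4) (G q r * Y d q r a)).
  rewrite mulr_sumr; apply: eq_bigr => q _; rewrite mulr_sumr; apply: eq_bigr => r _.
  rewrite !dlxx; ring.
by rewrite sumT_xuvy; ring.
Qed.

Lemma term19 a b c d : \sum_(p < 4) \sum_(q < 4) \sum_(r < 4) \sum_(s < 4) ((dl s a * g b c * G p r * dl q d) * Y p q r s) =
  1 * g b c * tr1 g Y d a.
Proof.
transitivity (\sum_(p < 4) \sum_(r < 4) ((dl a a * g b c * G p r * dl d d) * Y p d r a)).
  apply: eq_bigr => p _.
  rewrite (sum_only d) => [|i hi]; last by apply: big1 => r _; apply: big1 => s _; rewrite (dlN hi); ring.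
  apply: eq_bigr => r _.
  rewrite (sum_only a) => [|i hi]; last by rewrite (dlN hi); ring.
  reflexivity.
transitivity ((1 * g b c) * \sum_(p < 4) \sum_(r < 4) (G p r * Y p d r a)).
  rewrite mulr_sumr; apply: eq_bigr => p _; rewrite mulr_sumr; apply: eq_bigr => r _.
  rewrite !dlxx; ring.
by rewrite sumT_uxvy; ring.
Qed.

Lemma term20 a b c d : \sum_(p < 4) \sum_(q < 4) \sum_(r < 4) \sum_(s < 4) ((dl s a * g b d * dl p c * G q r) * Y p q r s) =
  (-1) * g b d * tr1 g Y c a.
Proof.
transitivity (\sum_(q < 4) \sum_(r < 4) ((dl a a * g b d * dl c c * G q r) * Y c q r a)).
  rewrite (sum_only c) => [|i hi]; last by apply: big1 => q _; apply: big1 => r _; apply: big1 => s _; rewrite (dlN hi); ring.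
  apply: eq_bigr => q _.
  apply: eq_bigr => r _.
  rewrite (sum_only a) => [|i hi]; last by rewrite (dlN hi); ring.
  reflexivity.
transitivity ((1 * g b d) * \sum_(q < 4) \sum_(r < 4) (G q r * Y c q r a)).
  rewrite mulr_sumr; apply: eq_bigr => q _; rewrite mulr_sumr; apply: eq_bigr => r _.
  rewrite !dlxx; ring.
by rewrite sumT_xuvy; ring.
Qed.

Lemma term21 a b c d : \sum_(p < 4) \sum_(q < 4) \sum_(r < 4) \sum_(s < 4) (- (dl s a * g b d * G p r * dl q c) * Y p q r s) =
  (-1) * g b d * tr1 g Y c a.
Proof.
transitivity (\sum_(p < 4) \sum_(r < 4) (- (dl a a * g b d * G p r * dl c c) * Y p c r a)).
  apply: eq_bigr => p _.
  rewrite (sum_only c) => [|i hi]; last by apply: big1 => r _; apply: big1 => s _; rewrite (dlN hi); ring.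
  apply: eq_bigr => r _.
  rewrite (sum_only a) => [|i hi]; last by rewrite (dlN hi); ring.
  reflexivity.
transitivity (((-1) * g b d) * \sum_(p < 4) \sum_(r < 4) (G p r * Y p c r a)).
  rewrite mulr_sumr; apply: eq_bigr => p _; rewrite mulr_sumr; apply: eq_bigr => r _.
  rewrite !dlxx; ring.
by rewrite sumT_uxvy; ring.
Qed.

Lemma term22 a b c d : \sum_(p < 4) \sum_(q < 4) \sum_(r < 4) \sum_(s < 4) (- (dl s a * dl r b * dl p c * dl q d) * Y p q r s) =
  1 * Y c d a b.
Proof.
transitivity ((- (dl a a * dl b b * dl c c * dl d d) * Y c d b a)).
  rewrite (sum_only c) => [|i hi]; last by apply: big1 => q _; apply: big1 => r _; apply: big1 => s _; rewrite (dlN hi); ring.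
  rewrite (sum_only d) => [|i hi]; last by apply: big1 => r _; apply: big1 => s _; rewrite (dlN hi); ring.
  rewrite (sum_only b) => [|i hi]; last by apply: big1 => s _; rewrite (dlN hi); ring.
  rewrite (sum_only a) => [|i hi]; last by rewrite (dlN hi); ring.
  reflexivity.
rewrite !dlxx (YA2 c d b a); ring.
Qed.

Lemma term23 a b c d : \sum_(p < 4) \sum_(q < 4) \sum_(r < 4) \sum_(s < 4) ((dl s a * dl r b * dl p d * dl q c) * Y p q r s) =
  1 * Y c d a b.
Proof.
transitivity (((dl a a * dl b b * dl d d * dl c c) * Y d c b a)).
  rewrite (sum_only d) => [|i hi]; last by apply: big1 => q _; apply: big1 => r _; apply: big1 => s _; rewrite (dlN hi); ring.
  rewrite (sum_only c) => [|i hi]; last by apply: big1 => r _; apply: big1 => s _; rewrite (dlN hi); ring.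
  rewrite (sum_only b) => [|i hi]; last by apply: big1 => s _; rewrite (dlN hi); ring.
  rewrite (sum_only a) => [|i hi]; last by rewrite (dlN hi); ring.
  reflexivity.
rewrite !dlxx (YA1 d c b a) (YA2 c d b a); ring.
Qed.


Lemma contract a b c d :
  \sum_(p < 4) \sum_(q < 4) \sum_(r < 4) \sum_(s < 4) ((
        (g a c * g b d * G p r * G q s)
  + - (g a c * g b d * G p s * G q r)
  + - (g a c * dl r b * dl p d * G q s)
  + (g a c * dl r b * G p s * dl q d)
  + (g a c * dl s b * dl p d * G q r)
  + - (g a c * dl s b * G p r * dl q d)
  + - (g a d * g b c * G p r * G q s)
  + (g a d * g b c * G p s * G q r)
  + (g a d * dl r b * dl p c * G q s)
  + - (g a d * dl r b * G p s * dl q c)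
  + - (g a d * dl s b * dl p c * G q r)
  + (g a d * dl s b * G p r * dl q c)
  + (dl r a * g b c * dl p d * G q s)
  + - (dl r a * g b c * G p s * dl q d)
  + - (dl r a * g b d * dl p c * G q s)
  + (dl r a * g b d * G p s * dl q c)
  + (dl r a * dl s b * dl p c * dl q d)
  + - (dl r a * dl s b * dl p d * dl q c)
  + - (dl s a * g b c * dl p d * G q r)
  + (dl s a * g b c * G p r * dl q d)
  + (dl s a * g b d * dl p c * G q r)
  + - (dl s a * g b d * G p r * dl q c)
  + - (dl s a * dl r b * dl p c * dl q d)
  + (dl s a * dl r b * dl p d * dl q c)) * Y p q r s) =
  (1 * g a c * g b d * tr2 g (tr1 g Y))
  + (1 * g a c * g b d * tr2 g (tr1 g Y))
  + ((-1) * g a c * tr1 g Y d b)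
  + ((-1) * g a c * tr1 g Y d b)
  + ((-1) * g a c * tr1 g Y d b)
  + ((-1) * g a c * tr1 g Y d b)
  + ((-1) * g a d * g b c * tr2 g (tr1 g Y))
  + ((-1) * g a d * g b c * tr2 g (tr1 g Y))
  + (1 * g a d * tr1 g Y c b)
  + (1 * g a d * tr1 g Y c b)
  + (1 * g a d * tr1 g Y c b)
  + (1 * g a d * tr1 g Y c b)
  + (1 * g b c * tr1 g Y d a)
  + (1 * g b c * tr1 g Y d a)
  + ((-1) * g b d * tr1 g Y c a)
  + ((-1) * g b d * tr1 g Y c a)
  + (1 * Y c d a b)
  + (1 * Y c d a b)
  + (1 * g b c * tr1 g Y d a)
  + (1 * g b c * tr1 g Y d a)
  + ((-1) * g b d * tr1 g Y c a)
  + ((-1) * g b d * tr1 g Y c a)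
  + (1 * Y c d a b)
  + (1 * Y c d a b).
Proof.
transitivity (\sum_(p < 4) \sum_(q < 4) \sum_(r < 4) \sum_(s < 4) (((g a c * g b d * G p r * G q s)) * Y p q r s + (- (g a c * g b d * G p s * G q r)) * Y p q r s + (- (g a c * dl r b * dl p d * G q s)) * Y p q r s + ((g a c * dl r b * G p s * dl q d)) * Y p q r s + ((g a c * dl s b * dl p d * G q r)) * Y p q r s + (- (g a c * dl s b * G p r * dl q d)) * Y p q r s + (- (g a d * g b c * G p r * G q s)) * Y p q r s + ((g a d * g b c * G p s * G q r)) * Y p q r s + ((g a d * dl r b * dl p c * G q s)) * Y p q r s + (- (g a d * dl r b * G p s * dl q c)) * Y p q r s + (- (g a d * dl s b * dl p c * G q r)) * Y p q r s + ((g a d * dl s b * G p r * dl q c)) * Y p q r s + ((dl r a * g b c * dl p d * G q s)) * Y p q r s + (- (dl r a * g b c * G p s * dl q d)) * Y p q r s + (- (dl r a * g b d * dl p c * G q s)) * Y p q r s + ((dl r a * g b d * G p s * dl q c)) * Y p q r s + ((dl r a * dl s b * dl p c * dl q d)) * Y p q r s + (- (dl r a * dl s b * dl p d * dl q c)) * Y p q r s + (- (dl s a * g b c * dl p d * G q r)) * Y p q r s + ((dl s a * g b c * G p r * dl q d)) * Y p q r s + ((dl s a * g b d * dl p c * G q r)) * Y p q r s + (- (dl s a * g b d * G p r * dl q c)) * Y p q r s + (- (dl s a * dl r b * dl p c * dl q d)) * Y p q r s + ((dl s a * dl r b * dl p d * dl q c)) * Y p q r s)).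
  apply: eq_bigr => p _; apply: eq_bigr => q _; apply: eq_bigr => r _; apply: eq_bigr => s _; ring.
rewrite !sum4_split.
rewrite term0 term1 term2 term3 term4 term5 term6 term7 term8 term9 term10 term11 term12 term13 term14 term15 term16 term17 term18 term19 term20 term21 term22 term23.
reflexivity.
Qed.
End Contr.

Section Formula.
Variable R : rcfType.
Variable g : 'M[R]_4.
Local Notation G := (ginv g).
Hypothesis gsym : forall i j, g i j = g j i.
Hypothesis Gsym : forall i j, G i j = G j i.
Hypothesis gG : forall i j, \sum_k g i k * G k j = dl i j.
Hypothesis Gg : forall i j, \sum_k G i k * g k j = dl i j.
Hypothesis sq2 : Num.sqrt (- \det g) ^+ 2 = - \det g.

Lemma dstar_formula (Y : tensor4 R) :
  (forall a b c d, Y a b c d = - Y b a c d) ->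
  (forall a b c d, Y a b c d = - Y a b d c) ->
  forall a b c d,
  dstar g Y a b c d = - Y c d a b
    + (g a c * tr1 g Y d b - g a d * tr1 g Y c b + g b d * tr1 g Y c a - g b c * tr1 g Y d a)
    - tr2 g (tr1 g Y) / 2 * (g a c * g b d - g a d * g b c).
Proof.
move=> YA1 YA2 a b c d.
rewrite /dstar.
transitivity (4^-1 * - \sum_(p < 4) \sum_(q < 4) \sum_(r < 4) \sum_(s < 4) ((
        (g a c * g b d * G p r * G q s)
  + - (g a c * g b d * G p s * G q r)
  + - (g a c * dl r b * dl p d * G q s)
  + (g a c * dl r b * G p s * dl q d)
  + (g a c * dl s b * dl p d * G q r)
  + - (g a c * dl s b * G p r * dl q d)
  + - (g a d * g b c * G p r * G q s)
  + (g a d * g b c * G p s * G q r)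
  + (g a d * dl r b * dl p c * G q s)
  + - (g a d * dl r b * G p s * dl q c)
  + - (g a d * dl s b * dl p c * G q r)
  + (g a d * dl s b * G p r * dl q c)
  + (dl r a * g b c * dl p d * G q s)
  + - (dl r a * g b c * G p s * dl q d)
  + - (dl r a * g b d * dl p c * G q s)
  + (dl r a * g b d * G p s * dl q c)
  + (dl r a * dl s b * dl p c * dl q d)
  + - (dl r a * dl s b * dl p d * dl q c)
  + - (dl s a * g b c * dl p d * G q r)
  + (dl s a * g b c * G p r * dl q d)
  + (dl s a * g b d * dl p c * G q r)
  + - (dl s a * g b d * G p r * dl q c)
  + - (dl s a * dl r b * dl p c * dl q d)
  + (dl s a * dl r b * dl p d * dl q c)) * Y p q r s)).
  congr (_ * _); rewrite -sumrN; apply: eq_bigr => p _; rewrite -sumrN; apply: eq_bigr => q _.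
  rewrite -sumrN; apply: eq_bigr => r _; rewrite -sumrN; apply: eq_bigr => s _.
  by rewrite (emem sq2) (detN Gsym gG Gg) mulNr.
rewrite (contract g YA1 YA2).
field. all: rewrite ?pnatr_eq0 //.
Qed.
End Formula.

Lemma ord4_ind (P : 'I_4 -> Prop) : P o0 -> P o1 -> P o2 -> P o3 -> forall i, P i.
Proof.
move=> h0 h1 h2 h3 [[|[|[|[|//]]]] Hi].
- by have -> : Ordinal Hi = o0 by apply: val_inj.
- by have -> : Ordinal Hi = o1 by apply: val_inj.
- by have -> : Ordinal Hi = o2 by apply: val_inj.
- by have -> : Ordinal Hi = o3 by apply: val_inj.
Qed.

Section X4.
Variable R : rcfType.
Variable X : tensor4 R.

Definition X4f (f : 'I_4 -> 'I_4) : R :=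
  24^-1 * \sum_(s : 'S_4) (-1) ^+ (odd_perm s) *
     X (f (s 0)) (f (s 1)) (f (s 2)) (f (s 3)).

Lemma X4E a b c d : X4 X a b c d = X4f (tnth [tuple a; b; c; d]).
Proof. by []. Qed.

Lemma eq_X4f f f' : f =1 f' -> X4f f = X4f f'.
Proof. by move=> h; rewrite /X4f; congr (_ * _); apply: eq_bigr => s _; rewrite !h. Qed.

Lemma X4f_comp f (t : 'S_4) : X4f (f \o t) = (-1) ^+ (odd_perm t) * X4f f.
Proof.
rewrite /X4f (reindex_inj (mulIg t^-1%g)) /= mulrCA; congr (_ * _).
rewrite mulr_sumr; apply: eq_bigr => s _.
have E : forall i, t ((s * t^-1)%g i) = s i by move=> i; rewrite -permM mulgKV.
by rewrite !E odd_permM odd_permV signr_addb -mulrA mulrCA.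
Qed.

Lemma X4_tp f (i j : 'I_4) : i != j -> X4f (f \o tperm i j) = - X4f f.
Proof. by move=> h; rewrite X4f_comp odd_tperm h expr1 mulN1r. Qed.

Ltac tpsolve := apply: ord4_ind => /=; by rewrite ?tpermL ?tpermR ?tpermD.

Lemma X4_A1 a b c d : X4 X a b c d = - X4 X b a c d.
Proof. rewrite !X4E (@eq_X4f (tnth [tuple b; a; c; d]) (tnth [tuple a; b; c; d] \o tperm o0 o1)); last by tpsolve.
by rewrite X4_tp ?opprK. Qed.
Lemma X4_A2 a b c d : X4 X a b c d = - X4 X a b d c.
Proof. rewrite !X4E (@eq_X4f (tnth [tuple a; b; d; c]) (tnth [tuple a; b; c; d] \o tperm o2 o3)); last by tpsolve.
by rewrite X4_tp ?opprK. Qed.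
Lemma X4_A13 a b c d : X4 X a b c d = - X4 X a d c b.
Proof. rewrite !X4E (@eq_X4f (tnth [tuple a; d; c; b]) (tnth [tuple a; b; c; d] \o tperm o1 o3)); last by tpsolve.
by rewrite X4_tp ?opprK. Qed.
Lemma X4_A02 a b c d : X4 X a b c d = - X4 X c b a d.
Proof. rewrite !X4E (@eq_X4f (tnth [tuple c; b; a; d]) (tnth [tuple a; b; c; d] \o tperm o0 o2)); last by tpsolve.
by rewrite X4_tp ?opprK. Qed.
Lemma X4_swap a b c d : X4 X c d a b = X4 X a b c d.
Proof. by rewrite X4_A02 X4_A13 opprK. Qed.

Lemma X4_tr (g : 'M[R]_4) : (forall i j, ginv g i j = ginv g j i) ->
  forall a c, tr1 g (X4 X) a c = 0.
Proof.
move=> Gsym a c.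
have h : tr1 g (X4 X) a c = - tr1 g (X4 X) a c.
  rewrite {1}/tr1 exchange_big /tr1 -sumrN; apply: eq_bigr => d _; rewrite -sumrN; apply: eq_bigr => b _.
  by rewrite (X4_A13 a b c d) (Gsym b d) mulrN.
lra.
Qed.
End X4.

Lemma sum2_comb4 (R : rcfType) (k1 k2 k3 k4 : R) (F1 F2 F3 F4 : 'I_4 -> 'I_4 -> R) :
  \sum_(b < 4) \sum_(d < 4) (k1 * F1 b d + k2 * F2 b d + k3 * F3 b d + k4 * F4 b d) =
  k1 * (\sum_(b < 4) \sum_(d < 4) F1 b d) + k2 * (\sum_(b < 4) \sum_(d < 4) F2 b d)
  + k3 * (\sum_(b < 4) \sum_(d < 4) F3 b d) + k4 * (\sum_(b < 4) \sum_(d < 4) F4 b d).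
Proof.
rewrite !mulr_sumr -!big_split; apply: eq_bigr => b _.
rewrite !mulr_sumr -!big_split; apply: eq_bigr => d _ //.
Qed.

Section Pieces.
Variable R : rcfType.
Variable g : 'M[R]_4.
Local Notation G := (ginv g).
Hypothesis gsym : forall i j, g i j = g j i.
Hypothesis Gsym : forall i j, G i j = G j i.
Hypothesis gG : forall i j, \sum_k g i k * G k j = dl i j.
Hypothesis Gg : forall i j, \sum_k G i k * g k j = dl i j.
Hypothesis sq2 : Num.sqrt (- \det g) ^+ 2 = - \det g.

Lemma tr1_comb (Y Y1 Y2 Y3 Y4 : tensor4 R) (k1 k2 k3 k4 : R) :
  (forall a b c d, Y a b c d = k1 * Y1 a b c d + k2 * Y2 a b c d + k3 * Y3 a b c d + k4 * Y4 a b c d) ->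
  forall x y, tr1 g Y x y = k1 * tr1 g Y1 x y + k2 * tr1 g Y2 x y + k3 * tr1 g Y3 x y + k4 * tr1 g Y4 x y.
Proof.
move=> h x y; rewrite /tr1 -sum2_comb4; apply: eq_bigr => b _; apply: eq_bigr => d _.
rewrite h; ring.
Qed.

Lemma tr2_comb (Y Y1 Y2 Y3 Y4 : tensor2 R) (k1 k2 k3 k4 : R) :
  (forall a c, Y a c = k1 * Y1 a c + k2 * Y2 a c + k3 * Y3 a c + k4 * Y4 a c) ->
  tr2 g Y = k1 * tr2 g Y1 + k2 * tr2 g Y2 + k3 * tr2 g Y3 + k4 * tr2 g Y4.
Proof.
move=> h; rewrite /tr2 -sum2_comb4; apply: eq_bigr => b _; apply: eq_bigr => d _.
rewrite h; ring.
Qed.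

Lemma cB (h : tensor2 R) a c : \sum_(b < 4) \sum_(d < 4) (G b d * g a d * h b c) = h a c.
Proof.
transitivity (\sum_(b < 4) dl a b * h b c).
  apply: eq_bigr => b _; rewrite -gG mulr_suml; apply: eq_bigr => d _; rewrite (Gsym b d); ring.
rewrite (sum_only a) => [|b hb]; last by rewrite dlC (dlN hb) mul0r.
by rewrite dlxx mul1r.
Qed.

Lemma cC : \sum_(b < 4) \sum_(d < 4) (G b d * g b d) = 4.
Proof.
transitivity (\sum_(b < 4) (dl b b : R)).
  apply: eq_bigr => b _; rewrite -Gg; apply: eq_bigr => d _; by rewrite (gsym b d).
rewrite sum4E !dlxx; ring.
Qed.

Lemma cD (h : tensor2 R) a c : \sum_(b < 4) \sum_(d < 4) (G b d * g b c * h a d) = h a c.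
Proof.
rewrite exchange_big.
transitivity (\sum_(d < 4) dl d c * h a d).
  apply: eq_bigr => d _; rewrite -Gg mulr_suml; apply: eq_bigr => b _; rewrite (Gsym b d); ring.
rewrite (sum_only c) => [|d hd]; last by rewrite (dlN hd) mul0r.
by rewrite dlxx mul1r.
Qed.

Lemma tr1_KN (h : tensor2 R) a c : tr1 g (KN g h) a c = h a c + tr2 g h / 2 * g a c.
Proof.
rewrite /tr1 /KN.
transitivity ((2^-1 * g a c) * (\sum_(b < 4) \sum_(d < 4) (G b d * h b d))
  + (- 2^-1) * (\sum_(b < 4) \sum_(d < 4) (G b d * g a d * h b c))
  + (2^-1 * h a c) * (\sum_(b < 4) \sum_(d < 4) (G b d * g b d))
  + (- 2^-1) * (\sum_(b < 4) \sum_(d < 4) (G b d * g b c * h a d))).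
  rewrite -sum2_comb4; apply: eq_bigr => b _; apply: eq_bigr => d _; ring.
rewrite cB cC cD /tr2; field. all: by rewrite ?pnatr_eq0.
Qed.


Lemma tr2_ext (h h' : tensor2 R) : (forall a c, h a c = h' a c) -> tr2 g h = tr2 g h'.
Proof. by move=> H; rewrite /tr2; apply: eq_bigr => a _; apply: eq_bigr => c _; rewrite H. Qed.

Lemma tr2_0 (h : tensor2 R) : (forall a c, h a c = 0) -> tr2 g h = 0.
Proof. by move=> H; rewrite /tr2 big1 // => a _; rewrite big1 // => c _; rewrite H mulr0. Qed.

Lemma trg : tr2 g (fun a b => g a b) = 4.
Proof. exact: cC. Qed.

Lemma KN_swap_sym (h : tensor2 R) : (forall x y, h x y = h y x) ->
  forall a b c d, KN g h c d a b = KN g h a b c d.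
Proof.
move=> hs a b c d; rewrite /KN (gsym c a) (gsym c b) (gsym d b) (gsym d a) (hs d b) (hs d a) (hs c a) (hs c b); ring.
Qed.
Lemma KN_swap_anti (h : tensor2 R) : (forall x y, h x y = - h y x) ->
  forall a b c d, KN g h c d a b = - KN g h a b c d.
Proof.
move=> hs a b c d; rewrite /KN (gsym c a) (gsym c b) (gsym d b) (gsym d a) (hs d b) (hs d a) (hs c a) (hs c b); ring.
Qed.
Lemma KN_A1 (h : tensor2 R) a b c d : KN g h a b c d = - KN g h b a c d.
Proof. rewrite /KN; ring. Qed.
Lemma KN_A2 (h : tensor2 R) a b c d : KN g h a b c d = - KN g h a b d c.
Proof. rewrite /KN; ring. Qed.

Lemma tr2_scale_g (k : R) : tr2 g (fun x y => k * g x y) = k * 4.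
Proof.
rewrite (@tr2_comb (fun x y => k * g x y) (fun x y => g x y) (fun x y => g x y) (fun x y => g x y) (fun x y => g x y) k 0 0 0); last by move=> *; ring.
rewrite trg; ring.
Qed.

Variable X : tensor4 R.
Hypothesis XA1 : forall a b c d, X a b c d = - X b a c d.
Hypothesis XA2 : forall a b c d, X a b c d = - X a b d c.
Local Notation T := (tr1 g X).

Lemma trT_t : tr2 g (fun a c => T c a) = tr2 g T.
Proof.
rewrite /tr2 exchange_big; apply: eq_bigr => a _; apply: eq_bigr => c _; by rewrite (Gsym c a).
Qed.

Lemma sumTt a c : \sum_(b < 4) \sum_(d < 4) (G b d * X c d a b) = T c a.
Proof.
rewrite exchange_big; apply: eq_bigr => d _; apply: eq_bigr => b _; by rewrite (Gsym b d).
Qed.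

Lemma tr1_Xsym a c : tr1 g (Xsym X) a c = 2^-1 * T a c + 2^-1 * T c a.
Proof.
rewrite /tr1 /Xsym.
transitivity (2^-1 * (\sum_(b < 4) \sum_(d < 4) (G b d * X a b c d)) + 2^-1 * (\sum_(b < 4) \sum_(d < 4) (G b d * X c d a b))
   + 0 * (\sum_(b < 4) \sum_(d < 4) (G b d * X c d a b)) + 0 * (\sum_(b < 4) \sum_(d < 4) (G b d * X c d a b))).
  rewrite -sum2_comb4; apply: eq_bigr => b _; apply: eq_bigr => d _; ring.
rewrite sumTt; rewrite /tr1; ring.
Qed.

Lemma tr1_Xanti a c : tr1 g (Xanti X) a c = 2^-1 * T a c - 2^-1 * T c a.
Proof.
rewrite /tr1 /Xanti.
transitivity (2^-1 * (\sum_(b < 4) \sum_(d < 4) (G b d * X a b c d)) + (- 2^-1) * (\sum_(b < 4) \sum_(d < 4) (G b d * X c d a b))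
   + 0 * (\sum_(b < 4) \sum_(d < 4) (G b d * X c d a b)) + 0 * (\sum_(b < 4) \sum_(d < 4) (G b d * X c d a b))).
  rewrite -sum2_comb4; apply: eq_bigr => b _; apply: eq_bigr => d _; ring.
rewrite sumTt; rewrite /tr1; ring.
Qed.

Lemma tr1_Xc a c : tr1 g (Xc X) a c = 2^-1 * T a c + 2^-1 * T c a.
Proof.
rewrite (@tr1_comb (Xc X) (Xsym X) (X4 X) X X 1 (-1) 0 0); last by move=> *; rewrite /Xc; ring.
rewrite tr1_Xsym (X4_tr X Gsym); ring.
Qed.

Lemma tr2_Xc : tr2 g (tr1 g (Xc X)) = tr2 g T.
Proof.
rewrite (@tr2_comb (tr1 g (Xc X)) T (fun a c => T c a) T T (2^-1) (2^-1) 0 0); last by move=> *; rewrite tr1_Xc; ring.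
rewrite trT_t; field. all: by rewrite ?pnatr_eq0.
Qed.

Lemma hXcE a b : hXc g X a b = 2^-1 * T a b + 2^-1 * T b a - tr2 g T / 4 * g a b.
Proof. by rewrite /hXc tr1_Xc tr2_Xc. Qed.

Lemma tr2_hXc : tr2 g (hXc g X) = 0.
Proof.
rewrite (@tr2_comb (hXc g X) T (fun a c => T c a) (fun a c => g a c) T (2^-1) (2^-1) (- (tr2 g T / 4)) 0); last by move=> *; rewrite hXcE; ring.
rewrite trT_t trg; field. all: by rewrite ?pnatr_eq0.
Qed.

Lemma tr1_X2 a c : tr1 g (X2 g X) a c = hXc g X a c.
Proof. by rewrite /X2 tr1_KN tr2_hXc !mul0r addr0. Qed.

Lemma X3E a b c d : X3 g X a b c d = KN g (fun x y => tr2 g T / 12 * g x y) a b c d.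
Proof. rewrite /X3 /KN; field. all: by rewrite ?pnatr_eq0. Qed.

Lemma tr1_X3 a c : tr1 g (X3 g X) a c = tr2 g T / 4 * g a c.
Proof.
rewrite (@tr1_comb (X3 g X) (KN g (fun x y => tr2 g T / 12 * g x y)) X X X 1 0 0 0); last by move=> *; rewrite X3E; ring.
rewrite tr1_KN tr2_scale_g; field. all: by rewrite ?pnatr_eq0.
Qed.

Lemma tr1_X1 a c : tr1 g (X1 g X) a c = 0.
Proof.
rewrite (@tr1_comb (X1 g X) (Xc X) (X2 g X) (X3 g X) X 1 (-1) (-1) 0); last by move=> *; rewrite /X1; ring.
rewrite tr1_Xc tr1_X2 tr1_X3 hXcE; field. all: by rewrite ?pnatr_eq0.
Qed.

Lemma tr2_tr1Xanti : tr2 g (tr1 g (Xanti X)) = 0.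
Proof.
rewrite (@tr2_comb (tr1 g (Xanti X)) T (fun a c => T c a) T T (2^-1) (- 2^-1) 0 0); last by move=> *; rewrite tr1_Xanti; ring.
rewrite trT_t; ring.
Qed.

Lemma tr1_X6 a c : tr1 g (X6 g X) a c = tr1 g (Xanti X) a c.
Proof. by rewrite /X6 tr1_KN tr2_tr1Xanti !mul0r addr0. Qed.

Lemma tr1_X5 a c : tr1 g (X5 g X) a c = 0.
Proof.
rewrite (@tr1_comb (X5 g X) (Xanti X) (X6 g X) X X 1 (-1) 0 0); last by move=> *; rewrite /X5; ring.
rewrite tr1_X6; ring.
Qed.


Lemma Xsym_A1 a b c d : Xsym X a b c d = - Xsym X b a c d.
Proof. rewrite /Xsym (XA1 b a c d) (XA2 c d b a); ring. Qed.
Lemma Xsym_A2 a b c d : Xsym X a b c d = - Xsym X a b d c.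
Proof. rewrite /Xsym (XA2 a b d c) (XA1 d c a b); ring. Qed.
Lemma Xsym_swap a b c d : Xsym X c d a b = Xsym X a b c d.
Proof. rewrite /Xsym; ring. Qed.
Lemma Xanti_A1 a b c d : Xanti X a b c d = - Xanti X b a c d.
Proof. rewrite /Xanti (XA1 b a c d) (XA2 c d b a); ring. Qed.
Lemma Xanti_A2 a b c d : Xanti X a b c d = - Xanti X a b d c.
Proof. rewrite /Xanti (XA2 a b d c) (XA1 d c a b); ring. Qed.
Lemma Xanti_swap a b c d : Xanti X c d a b = - Xanti X a b c d.
Proof. rewrite /Xanti; ring. Qed.
Lemma X3_A1 a b c d : X3 g X a b c d = - X3 g X b a c d.
Proof. rewrite /X3; ring. Qed.
Lemma X3_A2 a b c d : X3 g X a b c d = - X3 g X a b d c.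
Proof. rewrite /X3; ring. Qed.
Lemma X3_swap a b c d : X3 g X c d a b = X3 g X a b c d.
Proof. rewrite /X3 (gsym c a) (gsym d b) (gsym c b) (gsym d a); ring. Qed.
Lemma hXc_sym x y : hXc g X x y = hXc g X y x.
Proof. rewrite !hXcE (gsym x y); ring. Qed.
Lemma k_anti x y : tr1 g (Xanti X) x y = - tr1 g (Xanti X) y x.
Proof. rewrite !tr1_Xanti; ring. Qed.

Lemma X1_A1 a b c d : X1 g X a b c d = - X1 g X b a c d.
Proof. rewrite /X1 /Xc /X2 (Xsym_A1 a b c d) (X4_A1 X a b c d) (KN_A1 _ a b c d) (X3_A1 a b c d); ring. Qed.
Lemma X1_A2 a b c d : X1 g X a b c d = - X1 g X a b d c.
Proof. rewrite /X1 /Xc /X2 (Xsym_A2 a b c d) (X4_A2 X a b c d) (KN_A2 _ a b c d) (X3_A2 a b c d); ring. Qed.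
Lemma X1_swap a b c d : X1 g X c d a b = X1 g X a b c d.
Proof. by rewrite /X1 /Xc /X2 Xsym_swap X4_swap (KN_swap_sym hXc_sym) X3_swap. Qed.
Lemma X5_A1 a b c d : X5 g X a b c d = - X5 g X b a c d.
Proof. rewrite /X5 /X6 (Xanti_A1 a b c d) (KN_A1 _ a b c d); ring. Qed.
Lemma X5_A2 a b c d : X5 g X a b c d = - X5 g X a b d c.
Proof. rewrite /X5 /X6 (Xanti_A2 a b c d) (KN_A2 _ a b c d); ring. Qed.
Lemma X5_swap a b c d : X5 g X c d a b = - X5 g X a b c d.
Proof. rewrite /X5 /X6 Xanti_swap (KN_swap_anti k_anti); ring. Qed.

Lemma dX1 a b c d : dstar g (X1 g X) a b c d = - X1 g X a b c d.
Proof.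
rewrite (dstar_formula Gsym gG Gg sq2 X1_A1 X1_A2) !tr1_X1 (tr2_0 tr1_X1) X1_swap; ring.
Qed.

Lemma dX2 a b c d : dstar g (X2 g X) a b c d = X2 g X a b c d.
Proof.
rewrite (dstar_formula Gsym gG Gg sq2 (KN_A1 _) (KN_A2 _)) !tr1_X2 (tr2_ext tr1_X2) tr2_hXc.
rewrite /X2 (KN_swap_sym hXc_sym) (hXc_sym d b) (hXc_sym c b) (hXc_sym c a) (hXc_sym d a) /KN; field. all: by rewrite ?pnatr_eq0.
Qed.

Lemma dX3 a b c d : dstar g (X3 g X) a b c d = - X3 g X a b c d.
Proof.
rewrite (dstar_formula Gsym gG Gg sq2 X3_A1 X3_A2) !tr1_X3 (tr2_ext tr1_X3) X3_swap.
rewrite tr2_scale_g.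
rewrite (gsym d b) (gsym c b) (gsym c a) (gsym d a) /X3; field. all: by rewrite ?pnatr_eq0.
Qed.

Lemma dX4 a b c d : dstar g (X4 X) a b c d = - X4 X a b c d.
Proof.
rewrite (dstar_formula Gsym gG Gg sq2 (X4_A1 X) (X4_A2 X)) !(X4_tr X Gsym) (tr2_0 (X4_tr X Gsym)) X4_swap; ring.
Qed.

Lemma dX5 a b c d : dstar g (X5 g X) a b c d = X5 g X a b c d.
Proof.
rewrite (dstar_formula Gsym gG Gg sq2 X5_A1 X5_A2) !tr1_X5 (tr2_0 tr1_X5) X5_swap; ring.
Qed.

Lemma dX6 a b c d : dstar g (X6 g X) a b c d = - X6 g X a b c d.
Proof.
rewrite (dstar_formula Gsym gG Gg sq2 (KN_A1 _) (KN_A2 _)) !tr1_X6 (tr2_ext tr1_X6) tr2_tr1Xanti.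
rewrite /X6 (KN_swap_anti k_anti) (k_anti d b) (k_anti c b) (k_anti c a) (k_anti d a) /KN; field. all: by rewrite ?pnatr_eq0.
Qed.

Lemma all6 a b c d :
    dstar g (X1 g X) a b c d = - X1 g X a b c d /\
    dstar g (X2 g X) a b c d = X2 g X a b c d /\
    dstar g (X3 g X) a b c d = - X3 g X a b c d /\
    dstar g (X4 X) a b c d = - X4 X a b c d /\
    dstar g (X5 g X) a b c d = X5 g X a b c d /\
    dstar g (X6 g X) a b c d = - X6 g X a b c d.
Proof. by rewrite dX1 dX2 dX3 dX4 dX5 dX6. Qed.
End Pieces.

Unset Implicit Arguments.


Theorem mainTheorem4 (R : rcfType) (g : 'M[R]_4) (X : tensor4 R) :
  lorentzian g -> double_form X ->
  forall a b c d : 'I_4,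
    dstar g (X1 g X) a b c d = - X1 g X a b c d /\
    dstar g (X2 g X) a b c d = X2 g X a b c d /\
    dstar g (X3 g X) a b c d = - X3 g X a b c d /\
    dstar g (X4 X) a b c d = - X4 X a b c d /\
    dstar g (X5 g X) a b c d = X5 g X a b c d /\
    dstar g (X6 g X) a b c d = - X6 g X a b c d.
Proof.
move=> [gT [P [Pu gE]]] [XA1 XA2] a b c d.
have gsym : forall i j, g i j = g j i by move=> i j; rewrite -{1}gT mxE.
have detg : \det g = - (\det P) ^+ 2.
  rewrite gE !det_mulmx det_tr /minkowski_eta det_diag.
  rewrite !big_ord_recr big_ord0 /= !mxE /=. ring.
have gU : g \in unitmx.
  by rewrite unitmxE unitfE detg oppr_eq0 expf_eq0 /= -unitfE -unitmxE Pu.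
have Gsym : forall i j, ginv g i j = ginv g j i.
  by move=> i j; rewrite /ginv -[in LHS]gT -trmx_inv mxE.
have gG : forall i j, \sum_k g i k * ginv g k j = dl i j.
  by move=> i j; move/matrixP: (mulmxV gU) => /(_ i j); rewrite !mxE.
have Gg : forall i j, \sum_k ginv g i k * g k j = dl i j.
  by move=> i j; move/matrixP: (mulVmx gU) => /(_ i j); rewrite !mxE.
have sq2 : Num.sqrt (- \det g) ^+ 2 = - \det g.
  by apply: sqr_sqrtr; rewrite detg opprK sqr_ge0.
exact: (all6 gsym Gsym gG Gg sq2 XA1 XA2).
Qed.
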